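(* Let $r\ge 3$ and $1\le t\le r-2$ be integers. If $\mathcal F\subseteq X_1\times\dots\times X_r$ is coordinate-wise shifted and is a non-trivial $t$-intersecting family, then the family of projections $\mathcal P(\mathcal F)\subseteq 2^{[r]}$ is non-trivial $t$-intersecting, i.e. $|A\cap B|\ge t$ for all $A,B\in\mathcal P(\mathcal F)$ and $\bigl|\bigcap_{P\in\mathcal P(\mathcal F)}P\bigr|<t$.
   Context: Let $X_\ell=[n_\ell]$ for $1\le \ell\le r$, with $n_\ell\ge2$. For $A,B\in X_1\times\dots\times X_r$, write $A\cap B=\{\ell:A[\ell]=B[\ell]\}$ ($A[\ell]$ the $\ell$-th coordinate). $\mathcal F$ is $t$-intersecting if $|A\cap B|\ge t$ for all $A,B\in\mathcal F$; $\bigcap\mathcal F$ is the set of coordinates $\ell$ on which all members of $\mathcal F$ agree; a $t$-intersecting $\mathcal F$ is non-trivial if $|\bigcap\mathcal F|<t$. The projection of $F$ is $\mathcal P(F)=\{\ell\in[r]:F[\ell]=1\}$ and $\mathcal P(\mathcal F)=\{\mathcal P(F):F\in\mathcal F\}$. For $1\le\ell\le r$ and $1<j\le n_\ell$, the shift $S^{(\ell)}_j$ acts on $F\in\mathcal F$ by: if $F[\ell]=j$ and the sequence $F'$ obtained from $F$ by replacing its $\ell$-th coordinate by $1$ is not in $\mathcal F$, then $S^{(\ell)}_j(F)=F'$; otherwise $S^{(\ell)}_j(F)=F$. Set $S^{(\ell)}_j(\mathcal F)=\{S^{(\ell)}_j(F):F\in\mathcal F\}$. $\mathcal F$ is $\ell$-shifted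 if $S^{(\ell)}_j(\mathcal F)=\mathcal F$ for all $1<j\le n_\ell$, and coordinate-wise shifted if it is $\ell$-shifted for every $1\le\ell\le r$. *)

(* Defs.v *)
From mathcomp Require Import all_boot.
Set Implicit Arguments. Unset Strict Implicit. Unset Printing Implicit Defensive.

(* Coordinate l ranges over 'I_r (0-based index for l = 1..r).
   The set X_l = [n_l] = {1,...,n_l} is represented by 'I_(n l) = {0,...,n_l - 1},
   with ordinal value k representing the element k+1.  In particular the
   distinguished value "1" is the ordinal with value 0. *)
Section Product.
Variables (r : nat) (n : 'I_r -> nat).

Definition seqT := {dffun forall l : 'I_r, 'I_(n l)}.

Definition agree (A B : seqT) : {set 'I_r} := [set l | A l == B l].

Definition t_intersecting (F : {set seqT}) (t : nat) : Prop :=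
  forall A B, A \in F -> B \in F -> t <= #|agree A B|.

Definition common_coords (F : {set seqT}) : {set 'I_r} :=
  [set l | [forall A in F, forall B in F, A l == B l]].

Definition nontrivial_t_intersecting (F : {set seqT}) (t : nat) : Prop :=
  t_intersecting F t /\ #|common_coords F| < t.

Definition set_one (l : 'I_r) (A : seqT) : seqT :=
  @finfun _ (fun k => 'I_(n k))
    (fun k => if k == l then insubd (A k) 0 else A k).

Definition shift_elt (l : 'I_r) (j : 'I_(n l)) (F : {set seqT}) (A : seqT) : seqT :=
  if (A l == j) && (set_one l A \notin F) then set_one l A else A.

Definition shift (l : 'I_r) (j : 'I_(n l)) (F : {set seqT}) : {set seqT} :=
  [set shift_elt j F A | A in F].

(* l-shifted: S^(l)_j(F) = F for all 1 < j <= n_l, i.e. ordinal value >= 1 *)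
Definition l_shifted (l : 'I_r) (F : {set seqT}) : Prop :=
  forall j : 'I_(n l), 0 < val j -> shift j F = F.

Definition coord_shifted (F : {set seqT}) : Prop :=
  forall l : 'I_r, l_shifted l F.

Definition proj (A : seqT) : {set 'I_r} := [set l | val (A l) == 0].

Definition projF (F : {set seqT}) : {set {set 'I_r}} := [set proj A | A in F].

End Product.

Definition set_t_intersecting (r : nat) (G : {set {set 'I_r}}) (t : nat) : Prop :=
  forall P Q, P \in G -> Q \in G -> t <= #|P :&: Q|.

Definition set_nontrivial_t_intersecting (r : nat) (G : {set {set 'I_r}}) (t : nat) : Prop :=
  set_t_intersecting G t /\ #|\bigcap_(P in G) P| < t.

(* Main.v *)
Require Import Defs.
From mathcomp Require Import all_boot.

Section Aux.
Variables (r : nat) (n : 'I_r -> nat).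

Lemma set_oneE (l : 'I_r) (A : seqT n) k :
  val (set_one l A k) = if k == l then 0 else val (A k).
Proof.
rewrite /set_one ffunE; case: (k == l) => //.
rewrite val_insubd; case: (A k) => /= m Hm.
by case: n Hm => // p _; rewrite ltn0Sn.
Qed.

Lemma down (F : {set seqT n}) l A :
  coord_shifted F -> A \in F -> set_one l A \in F.
Proof.
move=> Hs AF.
have [H0|Hj] := eqVneq (val (A l)) 0.
  suff -> : set_one l A = A by [].
  apply/ffunP => k; apply: val_inj; rewrite set_oneE.
  by case: eqP => // ->; rewrite H0.
apply/negPn/negP => Hn.
have Hsh := Hs l (A l); rewrite lt0n Hj in Hsh.
have : shift_elt (A l) F A \in shift (A l) F by apply: imset_f.
by rewrite Hsh // /shift_elt eqxx (negbTE Hn) /= => /(negP Hn).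
Qed.

Lemma fold_down (F : {set seqT n}) (s : seq 'I_r) A :
  coord_shifted F -> A \in F -> foldr (@set_one r n) A s \in F.
Proof. by move=> Hs AF; elim: s => //= l s IH; apply: down. Qed.

Lemma foldE (s : seq 'I_r) (A : seqT n) k :
  val (foldr (@set_one r n) A s k) = if k \in s then 0 else val (A k).
Proof.
elim: s => //= l s IH; rewrite set_oneE in_cons.
by case: (k == l) => //=; apply: IH.
Qed.
End Aux.

Theorem lemma2p1 (r : nat) (n : 'I_r -> nat) (t : nat)
  (hr : 3 <= r) (ht1 : 1 <= t) (ht2 : t <= r - 2)
  (hn : forall l, 2 <= n l)
  (F : {set seqT n}) :
  coord_shifted F -> nontrivial_t_intersecting F t ->
  set_nontrivial_t_intersecting (projF F) t.
Proof.
move=> Hs [Hti Hc]; split.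
  move=> P Q /imsetP [A AF ->] /imsetP [B BF ->].
  set A' := foldr (@set_one r n) A (enum (~: proj B)).
  have A'F : A' \in F by apply: fold_down.
  apply: (leq_trans (Hti _ _ A'F BF)); apply: subset_leq_card.
  apply/subsetP => l; rewrite /agree !inE => /eqP /(congr1 val).
  have := @foldE r n (enum (~: proj B)) A l; rewrite mem_enum !inE => ->.
  case: eqP => [HB|Hb] //= H; first by rewrite H HB.
  by case: Hb; exact: esym H.
apply: leq_ltn_trans Hc; apply: subset_leq_card.
apply/subsetP => l /bigcapP Hl; rewrite inE.
apply/forall_inP => A AF; apply/forall_inP => B BF.
have := Hl _ (imset_f (@proj r n) AF); have := Hl _ (imset_f (@proj r n) BF).
rewrite !inE => /eqP HB /eqP HA; apply/eqP/val_inj; by rewrite HA HB.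
Qed.
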